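(* Consider robust dynamic pricing with feedback corrupted in at most $C$ rounds ($C$ known). The meta-algorithm described in the context, with the commitment subroutine \textsc{CommitKnown}, guarantees \[ \sum_{\ell\in\mathcal L}R(\ell)\le 2N_{\textsc{F}}+6C+3. \]
   Context: Robust dynamic pricing: there are $T$ rounds and an unknown valuation $v^\star\in[0,1)$. At each round $t$ the seller posts a price $p_t\in[0,1]$. The true sale indicator is $y_t=\mathbbm 1\{p_t\le v^\star\}$; the seller observes $\sigma_t\in\{0,1\}$, and at most $C$ rounds are corrupted: $|\{t\in[T]:\sigma_t\neq y_t\}|\le C$. Meta-algorithm: let $D=\lceil\log_2 T\rceil$. Consider the complete binary tree of intervals of depth $D$ with root $[0,1)$, where each non-leaf node $[L,R)$ has children $[L,M)$ and $[M,R)$, $M=(L+R)/2$; the depth-$D$ nodes are the leaves, forming the set $\mathcal L$ (each of length at most $1/T$), and $\ell^\star$ is the unique leaf containing $v^\star$. The algorithm keeps a current node $I$, initially the root, and repeats until the horizon ends: if $I=[L,R)$ is not a leaf, it performs a safety check — post $L$ and observe $\sigma_L$, post $R$ and observe $\sigma_R$; the check fails if $\sigma_L=0$ or $\sigma_R=1$ (by convention the query at $L=0$ and the query at $R=1$ always count as passing). On failure $I$ becomes its parent; otherwise it posts $M$, observes $\sigma_M$, and $I$ becomes $[M,R)$ if $\sigma_M=1$ and $[L,M)$ if $\sigma_M=0$. If $I$ is a leaf, the commitment subroutine is run on $I$; if it returns FAIL, $I$ becomes its parent. \textsc{CommitKnown}: each leaf $\ell$ has a counter $s_\ell$, initialized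 to $0$ at the start of the horizon and shared across all calls. On leaf $\ell=[L,R)$ it repeats: if $s_\ell\le C$, post $L$ and observe $\sigma_L$, post $R$ and observe $\sigma_R$; if $\sigma_L=0$ or $\sigma_R=1$, return FAIL, else increase $s_\ell$ by $1$. If $s_\ell>C$, post $L$ (and continue doing so). For a leaf $\ell$, $Q(\ell)$ is the set of rounds during which the commitment subroutine runs on $\ell$, and $R(\ell)=\sum_{t\in Q(\ell)}(v^\star-p_t\mathbbm 1\{p_t\le v^\star\})$. $N_{\textsc{F}}$ is the number of times the commitment subroutine returns FAIL on a leaf different from $\ell^\star$. *)

(* Defs.v *)
(* Model of the meta-algorithm with CommitKnown as a
   deterministic state machine driven by the observed feedback sequence. *)
From HB Require Import structures.
From mathcomp Require Import all_boot all_order all_algebra.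
Set Implicit Arguments. Unset Strict Implicit. Unset Printing Implicit Defensive.
Import Order.TTheory GRing.Theory Num.Theory.
Local Open Scope ring_scope.

(* Depth of the tree: D = ceil(log2 T) (up_log 2 T is the least e with T <= 2^e). *)
Definition depth (T : nat) : nat := up_log 2 T.

(* A node is a pair (d, k) with k < 2^d : the interval [k/2^d, (k+1)/2^d). *)
Section Nodes.
Variable R : realFieldType.
Definition lo (d k : nat) : R := k%:R / (2 ^ d)%:R.
Definition hi (d k : nat) : R := k.+1%:R / (2 ^ d)%:R.
Definition mid (d k : nat) : R := (k.*2.+1)%:R / (2 ^ d.+1)%:R.

(* Outcome of a query: a lower-endpoint query at price p passes iff the sale is
   observed, an upper-endpoint query passes iff no sale is observed;
   by convention queries at price 0 (lower) and 1 (upper) always pass. *)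
Definition pass_low (p : R) (sigma : bool) : bool := (p == 0) || sigma.
Definition pass_high (p : R) (sigma : bool) : bool := (p == 1) || ~~ sigma.
End Nodes.

Inductive phase :=
  | SafeL
  | SafeR of bool      (* safety check: L posted (bool = L-query passed); about to post R *)
  | SafeM
  | ComL               (* CommitKnown, s_l <= C: about to post L *)
  | ComR of bool       (* CommitKnown: L posted (bool = passed); about to post R *)
  | ComStay.           (* CommitKnown, s_l > C: post L forever *)

Record state := State {
  dep : nat;
  idx : nat;
  ph  : phase;
  cnt : nat -> nat      (* counters s_l, indexed by leaf index *)
}.

Definition is_commit (p : phase) : bool :=
  match p with ComL | ComR _ | ComStay => true | _ => false end.

Section Algo.
Variables (R : realFieldType) (T C : nat).
Let D := depth T.

(* Start of an iteration of the main loop at node (d,k) with counters s. *)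
Definition enter (s : nat -> nat) (d k : nat) : state :=
  if (d < D)%N then State d k SafeL s
  else if (s k <= C)%N then State d k ComL s else State d k ComStay s.

Definition incr (s : nat -> nat) (k : nat) : nat -> nat :=
  fun j => if j == k then (s k).+1 else s j.

Definition price (st : state) : R :=
  match ph st with
  | SafeL | ComL | ComStay => lo R (dep st) (idx st)
  | SafeR _ | ComR _ => hi R (dep st) (idx st)
  | SafeM => mid R (dep st) (idx st)
  end.

(* Transition after observing sigma for the price posted in st.
   Moving to the parent of (d,k) means moving to (d-1, k/2). *)
Definition step (st : state) (sigma : bool) : state :=
  let d := dep st in let k := idx st in let s := cnt st in
  match ph st with
  | SafeL => State d k (SafeR (pass_low (lo R d k) sigma)) s
  | SafeR okL =>
      if okL && pass_high (hi R d k) sigma then State d k SafeM s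
      else enter s d.-1 k./2
  | SafeM => if sigma then enter s d.+1 k.*2.+1 else enter s d.+1 k.*2
  | ComL => State d k (ComR (pass_low (lo R d k) sigma)) s
  | ComR okL =>
      if okL && pass_high (hi R d k) sigma then enter (incr s k) d k
      else enter s d.-1 k./2          (* FAIL *)
  | ComStay => st
  end.

Definition commit_fails (st : state) (sigma : bool) : bool :=
  match ph st with
  | ComR okL => ~~ (okL && pass_high (hi R (dep st) (idx st)) sigma)
  | _ => false
  end.

Definition init : state := enter (fun _ => 0%N) 0 0.

(* State at the start of round t (rounds are numbered 0, ..., T-1),
   given the observed feedback sequence sigma. *)
Fixpoint run (sigma : nat -> bool) (t : nat) : state :=
  match t with
  | 0 => init
  | t'.+1 => step (run sigma t') (sigma t')
  end.

Definition posted (sigma : nat -> bool) (t : nat) : R := price (run sigma t).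

Definition n_corrupt (v : R) (sigma : nat -> bool) : nat :=
  count (fun t => sigma t != (posted sigma t <= v)) (iota 0 T).

(* t is in Q(l) for the leaf l = (D, k). *)
Definition inQ (sigma : nat -> bool) (k t : nat) : bool :=
  let st := run sigma t in [&& is_commit (ph st), dep st == D & idx st == k].

(* R(l) for the leaf l = (D, k). *)
Definition leaf_regret (v : R) (sigma : nat -> bool) (k : nat) : R :=
  \sum_(t < T | inQ sigma k t)
     (v - (if posted sigma t <= v then posted sigma t else 0)).

(* N_F: number of FAILs of the commitment subroutine on leaves other than
   the leaf (D, kstar). *)
Definition n_fail (sigma : nat -> bool) (kstar : nat) : nat :=
  count (fun t => commit_fails (run sigma t) (sigma t) && (idx (run sigma t) != kstar))
        (iota 0 T).
End Algo.

(* Main.v *)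
Require Import Defs.
From HB Require Import structures.
From mathcomp Require Import all_boot all_order all_algebra.
From mathcomp Require Import lra zify.
Import Order.TTheory GRing.Theory Num.Theory.
Local Open Scope ring_scope.


Definition good (T C : nat) (s : state) : Prop :=
  [/\ (dep s <= depth T)%N, is_commit (ph s) = (dep s == depth T),
      (ph s = ComStay -> (C < cnt s (idx s))%N) &
      (forall b, (ph s = ComL \/ ph s = ComR b) -> (cnt s (idx s) <= C)%N)].

Lemma good_enter T C s d k : (d <= depth T)%N -> good T C (enter T C s d k).
Proof.
move=> hd; rewrite /enter; case: ltnP => h.
  split => //=; [by rewrite ltn_eqF | by move=> ? [] ].
have eD : d = depth T by apply/eqP; rewrite eqn_leq hd h.
case: leqP => hc; split => //=; rewrite ?eD ?eqxx //.
by move=> ? [].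
Qed.

Lemma enter_cnt T C s d k : cnt (enter T C s d k) = s.
Proof. by rewrite /enter; case: ifP => //; case: ifP. Qed.

Lemma enter_ph T C s d k : (forall b, ph (enter T C s d k) <> ComR b).
Proof. by move=> b; rewrite /enter; case: ifP => //; case: ifP. Qed.

Lemma good_step R T C s b : good T C s -> good T C (step R T C s b).
Proof.
case: s => d k p cn [/= hd hc hs hl]; rewrite /step /=.
case: p hc hs hl => [|okL| | |okL|] /= hc hs hl.
- by split => //= ; move=> ? [].
- case: ifP => _; first by split => //; move=> ? [].
  apply: good_enter; exact: leq_trans (leq_pred d) hd.
- have hlt : (d < depth T)%N by rewrite ltn_neqAle -hc hd.
  by case: ifP => _; apply: good_enter.
- by split => //= b' _; exact: (hl b' (or_introl erefl)).
- case: ifP => _; apply: good_enter => //.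
  exact: leq_trans (leq_pred d) hd.
- by split.
Qed.

Lemma good_init T C : good T C (init T C).
Proof. by apply: good_enter. Qed.

Set Implicit Arguments. Unset Strict Implicit. Unset Printing Implicit Defensive.

Definition term (R : realFieldType) (v p : R) : R := v - (if p <= v then p else 0).
Definition creg (R : realFieldType) T (v : R) s : R :=
  if is_commit (ph s) && (dep s == depth T) then term v (price R s) else 0.
Definition Phi (R : realFieldType) T (v : R) kstar s : R :=
  match ph s with
  | ComR okL => if dep s == depth T then
      (if idx s == kstar then (if okL then 0 else 1)
       else if okL && (v < lo R (depth T) (idx s)) then 1 else -1) else 0
  | _ => 0 end.
Definition ek (R : realFieldType) T (v : R) k s : nat :=
  match ph s with
  | ComR okL => [&& okL, dep s == depth T, idx s == k & v < lo R (depth T) k]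
  | _ => false end.

Lemma Ninv_gt0 (R : realFieldType) d : 0 < ((2 ^ d)%:R : R)^-1.
Proof. by rewrite invr_gt0 ltr0n expn_gt0. Qed.

Lemma hi_lo (R : realFieldType) d k : hi R d k = lo R d k + ((2 ^ d)%:R)^-1.
Proof. by rewrite /hi /lo -addn1 natrD mulrDl mul1r. Qed.

Lemma lo_ge0 (R : realFieldType) d k : 0 <= lo R d k.
Proof. by rewrite /lo divr_ge0 ?ler0n. Qed.

Lemma hi_ge0 (R : realFieldType) d k : 0 <= hi R d k.
Proof. by rewrite /hi divr_ge0 ?ler0n. Qed.

Lemma price_ge0 (R : realFieldType) s : 0 <= price R s.
Proof. by rewrite /price; case: (ph s); rewrite ?lo_ge0 ?hi_ge0 // /mid divr_ge0 ?ler0n. Qed.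

Lemma lo_hi_lt (R : realFieldType) d k j : lo R d k < hi R d j -> (k <= j)%N.
Proof.
rewrite /lo /hi ltr_pM2r ?Ninv_gt0 // ltr_nat ltnS //.
Qed.

Lemma term_ge0 (R : realFieldType) (v p : R) : 0 <= v -> 0 <= term v p.
Proof. rewrite /term; case: ifP => h hv; lra. Qed.

Lemma term_le (R : realFieldType) (v p : R) : 0 <= p -> 0 <= v -> term v p <= v.
Proof. rewrite /term; case: ifP => h hp hv; lra. Qed.

Lemma term_lo (R : realFieldType) (v p : R) : p <= v -> term v p = v - p.
Proof. by rewrite /term => ->. Qed.

Lemma term_hi (R : realFieldType) (v p : R) : v < p -> term v p = v.
Proof. by rewrite /term => h; rewrite leNgt h subr0. Qed.


Lemma Phi_enter (R : realFieldType) T C (v : R) kstar s d k :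
  Phi T v kstar (enter T C s d k) = 0.
Proof. by rewrite /enter; case: ifP => //; case: ifP. Qed.

Lemma acct (R : realFieldType) T C (v : R) kstar s b :
  0 <= v -> v < 1 -> lo R (depth T) kstar <= v -> v < hi R (depth T) kstar ->
  good T C s -> ~ (ph s = ComStay /\ dep s = depth T /\ idx s <> kstar) ->
  creg T v s + Phi T v kstar (step R T C s b) + (cnt s kstar)%:R <=
  Phi T v kstar s + 2 * (commit_fails R s b && (idx s != kstar))%:R
  + 3 * (b != (price R s <= v))%:R + ((2 ^ depth T)%:R)^-1
  + (cnt (step R T C s b) kstar)%:R.
Proof.
move=> v0 v1 lok hik.
have uniq : forall k, lo R (depth T) k <= v -> v < hi R (depth T) k -> k = kstar.
  move=> k h1 h2; apply/eqP.
  by rewrite eqn_leq (lo_hi_lt (le_lt_trans h1 hik)) (lo_hi_lt (le_lt_trans lok h2)).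
have hN := Ninv_gt0 R (depth T).
move Ef: (commit_fails R s b && (idx s != kstar)) => fb.
move Ec: (b != (price R s <= v)) => cb.
have F0 : 0 <= fb%:R :> R := ler0n _ _.
have C0 : 0 <= cb%:R :> R := ler0n _ _.
case: s Ef Ec => d k p cn Ef Ec [/= hd hc hs hl] hns.
rewrite /creg /step /=.
case: p Ef Ec hc hs hl hns => [|okL| | |okL|] /= Ef Ec hc hs hl hns; rewrite /price /= in Ec *.
- rewrite /Phi /=; lra.
- case: ifP => _; rewrite ?Phi_enter ?enter_cnt /Phi /=; lra.
- case: ifP => _; rewrite ?Phi_enter ?enter_cnt /Phi /=; lra.
- have eD : d = depth T by apply/eqP; rewrite -hc.
  subst d; rewrite eqxx /Phi /= eqxx.
  have hlo := lo_ge0 R (depth T) k.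
  have tle := term_le (lo_ge0 R (depth T) k) v0.
  case: (eqVneq k kstar) => [ek | hk].
    subst k; rewrite (term_lo lok); move: hik; rewrite hi_lo => hik.
    rewrite lok in Ec.
    rewrite /pass_low; case: b Ec => /= Ec; rewrite ?orbT ?orbF; first lra.
    case: eqP => _ /=; first lra.
    rewrite -Ec /=; lra.
  rewrite /pass_low.
  case: (ltP v (lo R (depth T) k)) => hv; last by rewrite andbF; lra.
  have -> : (lo R (depth T) k == 0) = false by rewrite gt_eqF // (le_lt_trans v0 hv).
  case: b Ec => /= Ec; last lra.
  rewrite (lt_geF hv) /= in Ec; rewrite -Ec /=; lra.
- have eD : d = depth T by apply/eqP; rewrite -hc.
  subst d; rewrite eqxx.
  have hhi := hi_ge0 R (depth T) k.
  have tle := term_le (hi_ge0 R (depth T) k) v0.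
  case E: (okL && pass_high (hi R (depth T) k) b); rewrite Phi_enter enter_cnt /Phi /=.
    move/andP: E => [hok hph]; rewrite hok.
    rewrite /incr; case: (eqVneq k kstar) => [ek | hk].
      subst k; rewrite eqxx -addn1 natrD /=; lra.
    rewrite eqxx /=; case: ltP => hv /=; first lra.
    have hiv : hi R (depth T) k <= v.
      rewrite leNgt; apply/negP => h; apply: (negP hk); apply/eqP; exact: uniq.
    move: hph; rewrite /pass_high; case: eqP => /= [h1|_]; first lra.
    move/negbTE => hb; rewrite hb hiv /= in Ec; rewrite -Ec /=; lra.
  rewrite /commit_fails /= E /= in Ef; rewrite eqxx.
  case: (eqVneq k kstar) => [ek | hk].
    subst k; rewrite (term_hi hik).
    clear hns hs hl; case: okL E Ef => /= E Ef; last lra.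
    move: E; rewrite /pass_high; case: eqP => //= _; case: b Ec => //= Ec _.
    rewrite (lt_geF hik) /= in Ec; rewrite -Ec /=; lra.
  rewrite hk /= in Ef; rewrite -Ef /=; case: ifP => _; lra.
- have eD : d = depth T by apply/eqP; rewrite -hc.
  subst d; rewrite eqxx /Phi /=.
  have ek : k = kstar.
    case: (eqVneq k kstar) => // hk; exfalso; apply: hns; split => //; split => //; exact/eqP.
  subst k; rewrite (term_lo lok); move: hik; rewrite hi_lo => hik; lra.
Qed.


Lemma ek_enter (R : realFieldType) T C (v : R) k' s d k : ek T v k' (enter T C s d k) = 0%N.
Proof. by rewrite /enter; case: ifP => //; case: ifP. Qed.

Lemma ek_step (R : realFieldType) T C (v : R) kstar s b k' :
  0 <= v -> v < 1 -> lo R (depth T) kstar <= v -> v < hi R (depth T) kstar ->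
  good T C s -> k' != kstar ->
  (cnt (step R T C s b) k' + ek T v k' (step R T C s b)
     <= cnt s k' + ek T v k' s + (b != (price R s <= v)%R))%N.
Proof.
move=> v0 v1 lok hik.
have uniq : forall k, lo R (depth T) k <= v -> v < hi R (depth T) k -> k = kstar.
  move=> k h1 h2; apply/eqP.
  by rewrite eqn_leq (lo_hi_lt (le_lt_trans h1 hik)) (lo_hi_lt (le_lt_trans lok h2)).
case: s => d k p cn [/= hd hc hs hl] hk'.
rewrite /step /price /=.
case: p hc hs hl => [|okL| | |okL|] /= hc hs hl.
- by rewrite /ek /= !addn0 leq_addr.
- by case: ifP => _; rewrite ?ek_enter ?enter_cnt /ek /= !addn0 leq_addr.
- by case: ifP => _; rewrite ?ek_enter ?enter_cnt /ek /= !addn0 leq_addr.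
- have eD : d = depth T by apply/eqP; rewrite -hc.
  subst d; rewrite /ek /= eqxx /= addn0.
  case: (eqVneq k k') => [<-|hkk] /=; last by rewrite andbF addn0 leq_addr.
  case: (ltP v (lo R (depth T) k)) => hv /=; rewrite ?andbF ?addn0 ?leq_addr //.
  rewrite /pass_low.
  have -> : (lo R (depth T) k == 0) = false by rewrite gt_eqF // (le_lt_trans v0 hv).
  by case: b => //=; rewrite andbT.
- have eD : d = depth T by apply/eqP; rewrite -hc.
  subst d.
  case E: (okL && pass_high (hi R (depth T) k) b);
    rewrite ek_enter enter_cnt addn0 /ek /= eqxx /=; last by rewrite -addnA leq_addr.
  move/andP: E => [hok hph]; rewrite hok /incr.
  case: (eqVneq k' k) => [ek|hkk] /=; last by rewrite -addnA leq_addr.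
  subst k'.
  case: (ltP v (lo R (depth T) k)) => hv /=; first by lia.
  have hiv : hi R (depth T) k <= v.
    rewrite leNgt; apply/negP => h; apply: (negP hk'); apply/eqP; exact: uniq.
  move: hph; rewrite /pass_high; case: eqP => /= [h1|_]; first by exfalso; lra.
  by move/negbTE => ->; rewrite hiv /= addn0 addn1.
- by rewrite leq_addr.
Qed.

Lemma cnt_step_kstar (R : realFieldType) T C kstar s b :
  good T C s -> (cnt s kstar <= C.+1)%N -> (cnt (step R T C s b) kstar <= C.+1)%N.
Proof.
case: s => d k p cn [/= hd hc hs hl] h.
rewrite /step /=.
case: p hc hs hl => [|okL| | |okL|] /= hc hs hl //.
- by case: ifP => _; rewrite ?enter_cnt.
- by case: ifP => _; rewrite ?enter_cnt.
- case: ifP => _; rewrite enter_cnt // /incr.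
  case: eqP => [_|_] /=; last by []. exact: (hl okL (or_intror erefl)).
Qed.


Definition Cor (R : realFieldType) T C (v : R) sigma t :=
  count (fun u => sigma u != (posted R T C sigma u <= v)) (iota 0 t).
Definition Fc (R : realFieldType) T C sigma kstar t :=
  count (fun u => commit_fails R (run R T C sigma u) (sigma u)
                  && (idx (run R T C sigma u) != kstar)) (iota 0 t).
Definition Reg (R : realFieldType) T C (v : R) sigma t :=
  \sum_(u < t) creg T v (run R T C sigma u).

Lemma count_iotaS (p : pred nat) t : count p (iota 0 t.+1) = (count p (iota 0 t) + p t)%N.
Proof. by rewrite -addn1 iotaD count_cat /= addn0 add0n. Qed.

Lemma count_iota_mono (p : pred nat) t T : (t <= T)%N -> (count p (iota 0 t) <= count p (iota 0 T))%N.
Proof. by move=> h; rewrite -(subnKC h) iotaD count_cat leq_addr. Qed.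

Lemma inv_run (R : realFieldType) T C (v : R) kstar sigma t :
  0 <= v -> v < 1 -> lo R (depth T) kstar <= v -> v < hi R (depth T) kstar ->
  let s := run R T C sigma t in
  [/\ good T C s,
      (forall k', k' != kstar -> (cnt s k' + ek T v k' s <= Cor T C v sigma t)%N) &
      (cnt s kstar <= C.+1)%N].
Proof.
move=> v0 v1 lok hik; elim: t => [|t [IH1 IH2 IH3]] /=.
  split; first exact: good_init.
    by move=> k' _; rewrite /init enter_cnt ek_enter.
  by rewrite /init enter_cnt.
split; first exact: good_step.
  move=> k' hk; rewrite /Cor count_iotaS.
  apply: leq_trans (@ek_step R T C v kstar _ (sigma t) k' v0 v1 lok hik IH1 hk) _.
  exact: leq_add (IH2 _ hk) (leqnn _).
exact: cnt_step_kstar.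
Qed.


Lemma pot (R : realFieldType) T C (v : R) kstar sigma t :
  0 <= v -> v < 1 -> lo R (depth T) kstar <= v -> v < hi R (depth T) kstar ->
  (n_corrupt T C v sigma <= C)%N -> (t <= T)%N ->
  Reg T C v sigma t + Phi T v kstar (run R T C sigma t) <=
  2 * (Fc R T C sigma kstar t)%:R + 3 * (Cor T C v sigma t)%:R
  + t%:R * ((2 ^ depth T)%:R)^-1 + (cnt (run R T C sigma t) kstar)%:R.
Proof.
move=> v0 v1 lok hik hC; elim: t => [|t IH] ht.
  rewrite /Reg big_ord0 /= /init Phi_enter enter_cnt /Fc /Cor /= !mul0r mulr0.
  lra.
have ht' : (t <= T)%N by apply: ltnW.
have {}IH := IH ht'.
have [g1 g2 g3] := @inv_run R T C v kstar sigma t v0 v1 lok hik.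
have nws : ~ (ph (run R T C sigma t) = ComStay /\ dep (run R T C sigma t) = depth T
               /\ idx (run R T C sigma t) <> kstar).
  move=> [hph [hd hk]].
  case: g1 => _ _ hs _.
  have := hs hph.
  have := g2 _ (introN eqP hk).
  have : (Cor T C v sigma t <= C)%N.
    apply: leq_trans hC; exact: count_iota_mono.
  lia.
have A := acct (sigma t) v0 v1 lok hik g1 nws.
rewrite /Reg big_ord_recr /= -/(Reg T C v sigma t).
rewrite /Fc /Cor !count_iotaS -/(Fc R T C sigma kstar t) -/(Cor T C v sigma t).
rewrite !natrD -addn1 natrD mulrDl mul1r.
move: A IH.
rewrite /posted.
move: (commit_fails R (run R T C sigma t) (sigma t) && (idx (run R T C sigma t) != kstar)) => fb.
move: (sigma t != (price R (run R T C sigma t) <= v)) => cb.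
move: (creg T v (run R T C sigma t)) => cr.
move: (Phi T v kstar (run R T C sigma t)) => p0.
move: (Phi T v kstar (step R T C (run R T C sigma t) (sigma t))) => p1.
move: (cnt (run R T C sigma t) kstar) => n0.
move: (cnt (step R T C (run R T C sigma t) (sigma t)) kstar) => n1.
move: (Reg T C v sigma t) => rg.
move: ((2 ^ depth T)%:R^-1 : R) => N.
move: (Fc R T C sigma kstar t) (Cor T C v sigma t) => f c.
move=> A IH; lra.
Qed.


Lemma sum_ind (R : realFieldType) (x : R) (i N : nat) :
  \sum_(k < N) (if i == k then x else 0) = if (i < N)%N then x else 0.
Proof.
elim: N => [|N IH]; first by rewrite big_ord0 ltn0.
rewrite big_ord_recr /= IH.
case: (ltngtP i N) => h.
- by rewrite ltnS (ltnW h) addr0.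
- by rewrite ltnS leqNgt h addr0.
- by rewrite -h ltnSn add0r.
Qed.

Lemma Phi_ge (R : realFieldType) T (v : R) kstar s : -1 <= Phi T v kstar s.
Proof.
rewrite /Phi; case: (ph s) => [| _ | | | okL |]; try lra.
case: ifP => _; last lra.
case: ifP => _; first by case: okL; lra.
case: ifP => _; lra.
Qed.

Lemma regret_le (R : realFieldType) T C (v : R) sigma :
  0 <= v ->
  \sum_(k < 2 ^ depth T) leaf_regret T C v sigma k <= Reg T C v sigma T.
Proof.
move=> v0.
rewrite (eq_bigr (fun k : 'I_(2 ^ depth T) => \sum_(t < T)
   (if inQ R T C sigma k t then term v (price R (run R T C sigma t)) else 0))); last first.
  by move=> k _; rewrite /leaf_regret big_mkcond.
rewrite exchange_big /Reg; apply: ler_sum => t _.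
rewrite /inQ /creg.
case H: (is_commit (ph (run R T C sigma t)) && (dep (run R T C sigma t) == depth T)).
  have hx := term_ge0 (price R (run R T C sigma t)) v0.
  rewrite (eq_bigr (fun k : 'I_(2 ^ depth T) => if idx (run R T C sigma t) == k
       then term v (price R (run R T C sigma t)) else 0)); last first.
    by move=> k _; rewrite andbA H.
  by rewrite sum_ind; case: ifP.
rewrite big1 // => k _; by rewrite andbA H.
Qed.

Unset Implicit Arguments.

Theorem lemma4p2 (R : realFieldType) (T C : nat) (v : R) (sigma : nat -> bool)
    (kstar : nat) :
  0 <= v -> v < 1 ->
  (kstar < 2 ^ depth T)%N ->
  lo R (depth T) kstar <= v -> v < hi R (depth T) kstar ->
  (n_corrupt T C v sigma <= C)%N ->
  \sum_(k < 2 ^ depth T) leaf_regret T C v sigma k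
    <= 2 * (n_fail R T C sigma kstar)%:R + 6 * C%:R + 3.
Proof.
move=> v0 v1 hk lok hik hC.
have R1 := @regret_le R T C v sigma v0.
have P := @pot R T C v kstar sigma T v0 v1 lok hik hC (leqnn T).
have Pg := @Phi_ge R T v kstar (run R T C sigma T).
have [_ _ g3] := @inv_run R T C v kstar sigma T v0 v1 lok hik.
have hcor : ((Cor T C v sigma T)%:R <= C%:R :> R) by rewrite ler_nat.
have hcnt : ((cnt (run R T C sigma T) kstar)%:R <= C%:R + 1 :> R).
  by rewrite -[1]/(1%:R) -natrD ler_nat addn1.
have hTN : T%:R * ((2 ^ depth T)%:R)^-1 <= 1 :> R.
  rewrite -/(T%:R / (2 ^ depth T)%:R) ler_pdivrMr ?ltr0n ?expn_gt0 // mul1r ler_nat.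
  exact: up_logP.
change (n_fail R T C sigma kstar) with (Fc R T C sigma kstar T).
move: R1 P Pg hcor hcnt hTN.
move: (\sum_(k < 2 ^ depth T) leaf_regret T C v sigma k) => S.
move: (Reg T C v sigma T) => rg.
move: (Phi T v kstar (run R T C sigma T)) => p.
move: (T%:R * ((2 ^ depth T)%:R)^-1 : R) => tn.
move: ((cnt (run R T C sigma T) kstar)%:R : R) => n.
move: ((Cor T C v sigma T)%:R : R) => c.
move: ((Fc R T C sigma kstar T)%:R : R) => f.
have C0 : 0 <= C%:R :> R := ler0n _ _.
move: C0; move: (C%:R : R) => cr.
move=> *; lra.
Qed.
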